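(* Let $(N,g)$ be a simply connected five-dimensional two-step nilpotent Lie group with a left-invariant Riemannian metric, with Lie algebra $\mathfrak{n}$ and orthonormal basis $e_1,\dots,e_5$ as in one of the three normal forms below, and let $\mathfrak{h}$ be the center of $\mathfrak{n}$. A left-invariant vector field $X\in\mathfrak{n}$ is harmonic if and only if: (a) $X\in\mathfrak{h}^\perp$, in the cases where $\dim\mathfrak{h}$ is $1$ or $2$ (Cases 1 and 2); (b) $\langle X,e_3\rangle=0$, in the case where $\dim\mathfrak{h}=3$ (Case 3).
   Context: A Lie algebra $\mathfrak{n}$ is two-step nilpotent if $[\mathfrak{n},\mathfrak{n}]\neq 0$ and $[\mathfrak{n},[\mathfrak{n},\mathfrak{n}]]=0$. Left-invariant vector fields are identified with elements of $\mathfrak{n}=T_eN$, and $g$ with an inner product $\langle\cdot,\cdot\rangle$ on $\mathfrak{n}$. Up to isometry, such $(\mathfrak{n},\langle\cdot,\cdot\rangle)$ admits an orthonormal basis $e_1,\dots,e_5$ with one of the following bracket structures (all brackets not listed being zero): (Case 1, center of dimension 1) $[e_1,e_2]=\lambda e_5$, $[e_3,e_4]=\mu e_5$ with $\lambda\ge\mu>0$; (Case 2, center of dimension 2) $[e_1,e_2]=\lambda e_4$, $[e_1,e_3]=\mu e_5$ with $\lambda\ge\mu>0$; (Case 3, center of dimension 3) $[e_1,e_2]=\lambda e_3$ with $\lambda>0$. A vector field $X$ is harmonic if its metric dual 1-form $X^\flat=g(X,\cdot)$ satisfies $\Delta X^\flat=0$, where $\Delta=d\circ\delta+\delta\circ d$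 is the Laplace–Beltrami operator on forms, $d$ is the exterior derivative and $\delta=-\mathrm{div}$ is the codifferential. *)

(* Defs.v *)
(* Everything is left-invariant, hence determined at the identity: we work on
   the Lie algebra n = R^5 with orthonormal basis e_1..e_5, encoded as the
   coordinate indices 0..4 of a vector  v : nat -> R  (coordinates >= 5 are
   never used). *)
From Stdlib Require Import Reals Lra Lia.
Open Scope R_scope.

Definition vec := nat -> R.

(* structure constants: [e_i, e_j] = sum_k c i j k e_k  (0-based indices) *)
Definition sconst := nat -> nat -> nat -> R.

Definition sum5 (f : nat -> R) : R := sum_f_R0 f 4.

(* the orthonormal basis vector e_(i+1) *)
Definition ebasis (i : nat) : vec := fun k => if Nat.eqb k i then 1 else 0.

Definition ip (x y : vec) : R := sum5 (fun i => x i * y i).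

Definition br (c : sconst) (x y : vec) : vec :=
  fun k => sum5 (fun i => sum5 (fun j => x i * y j * c i j k)).

Definition vadd (x y : vec) : vec := fun k => x k + y k.

Definition vzero (v : vec) : Prop := forall k, (k < 5)%nat -> v k = 0.

(* Levi-Civita connection on left-invariant fields (Koszul formula):
   <nabla_X Y, Z> = 1/2 (<[X,Y],Z> - <[Y,Z],X> + <[Z,X],Y>) *)
Definition nabla (c : sconst) (x y : vec) : vec :=
  fun k => / 2 * (ip (br c x y) (ebasis k) - ip (br c y (ebasis k)) x
                  + ip (br c (ebasis k) x) y).

(* left-invariant 0-, 1-, 2-forms: constants, and (multi)linear maps on n *)
Definition form1 := vec -> R.
Definition form2 := vec -> vec -> R.

Definition flat (x : vec) : form1 := fun y => ip x y.

(* exterior derivative of a left-invariant 1-form: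
   d w (Y,Z) = Y(w Z) - Z(w Y) - w([Y,Z]) = - w([Y,Z]) *)
Definition d1 (c : sconst) (w : form1) : form2 := fun y z => - w (br c y z).

(* exterior derivative of a left-invariant (i.e. constant) function is 0 *)
Definition d0 (f : R) : form1 := fun _ => 0.

(* codifferential of a 1-form: delta w = - sum_i (nabla_{e_i} w)(e_i),
   with (nabla_Y w)(Z) = Y(w Z) - w(nabla_Y Z) = - w(nabla_Y Z) *)
Definition delta1 (c : sconst) (w : form1) : R :=
  - sum5 (fun i => - w (nabla c (ebasis i) (ebasis i))).

(* codifferential of a 2-form: (delta b)(X) = - sum_i (nabla_{e_i} b)(e_i, X),
   with (nabla_Y b)(Z,W) = - b(nabla_Y Z, W) - b(Z, nabla_Y W) *)
Definition delta2 (c : sconst) (b : form2) : form1 := fun x =>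
  - sum5 (fun i => - b (nabla c (ebasis i) (ebasis i)) x
                   - b (ebasis i) (nabla c (ebasis i) x)).

Definition laplace1 (c : sconst) (w : form1) : form1 :=
  fun x => d0 (delta1 c w) x + delta2 c (d1 c w) x.

Definition harmonic (c : sconst) (x : vec) : Prop :=
  forall y : vec, laplace1 c (flat x) y = 0.

Definition in_center (c : sconst) (z : vec) : Prop :=
  forall y : vec, vzero (br c z y).
Definition perp_center (c : sconst) (x : vec) : Prop :=
  forall z : vec, in_center c z -> ip x z = 0.

(* Normal forms (0-based indices: e_1 = 0, ..., e_5 = 4) *)
(* Case 1: [e1,e2] = lam e5, [e3,e4] = mu e5 *)
Definition case1 (lam mu : R) : sconst := fun i j k =>
  match i, j, k with
  | O, 1%nat, 4%nat => lam | 1%nat, 0%nat, 4%nat => - lam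
  | 2%nat, 3%nat, 4%nat => mu  | 3%nat, 2%nat, 4%nat => - mu
  | _, _, _ => 0%R end.

(* Case 2: [e1,e2] = lam e4, [e1,e3] = mu e5 *)
Definition case2 (lam mu : R) : sconst := fun i j k =>
  match i, j, k with
  | O, 1%nat, 3%nat => lam | 1%nat, 0%nat, 3%nat => - lam
  | O, 2%nat, 4%nat => mu  | 2%nat, 0%nat, 4%nat => - mu
  | _, _, _ => 0%R end.

(* Case 3: [e1,e2] = lam e3 *)
Definition case3 (lam : R) : sconst := fun i j k =>
  match i, j, k with
  | O, 1%nat, 2%nat => lam | 1%nat, 0%nat, 2%nat => - lam
  | _, _, _ => 0%R end.

(* Main.v *)
Require Import Defs.
From Stdlib Require Import Reals Lra Lia FunctionalExtensionality.
Open Scope R_scope.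

Definition br1 (lam mu : R) (x y : vec) : vec := fun k =>
  match k with 4%nat => lam*(x 0%nat * y 1%nat - x 1%nat * y 0%nat) + mu*(x 2%nat * y 3%nat - x 3%nat * y 2%nat) | _ => 0 end.
Lemma br1E lam mu x y : br (case1 lam mu) x y = br1 lam mu x y.
Proof. extensionality k. destruct k as [|[|[|[|[|k]]]]]; unfold br, sum5, case1, br1; simpl; ring. Qed.
Definition nab1 (lam mu : R) (x y : vec) : vec := fun k =>
  match k with
  | 0%nat => / 2 * lam * (y 1%nat * x 4%nat + x 1%nat * y 4%nat)
  | 1%nat => - / 2 * lam * (x 0%nat * y 4%nat + y 0%nat * x 4%nat)
  | 2%nat => / 2 * mu * (y 3%nat * x 4%nat + x 3%nat * y 4%nat)
  | 3%nat => - / 2 * mu * (x 2%nat * y 4%nat + y 2%nat * x 4%nat)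
  | 4%nat => / 2 * (lam * (x 0%nat * y 1%nat - x 1%nat * y 0%nat) + mu * (x 2%nat * y 3%nat - x 3%nat * y 2%nat))
  | _ => 0 end.
Lemma nab1E lam mu x y : nabla (case1 lam mu) x y = nab1 lam mu x y.
Proof. extensionality k. unfold nabla. rewrite !br1E. destruct k as [|[|[|[|[|k]]]]]; unfold br1, nab1, ip, sum5, ebasis; simpl; ring. Qed.
Lemma nab1F lam mu : nabla (case1 lam mu) = nab1 lam mu.
Proof. do 2 (apply functional_extensionality; intro). apply nab1E. Qed.
Lemma br1F lam mu : br (case1 lam mu) = br1 lam mu.
Proof. do 2 (apply functional_extensionality; intro). apply br1E. Qed.
Lemma lap1 lam mu X y : laplace1 (case1 lam mu) (flat X) y = X 4%nat * (lam^2 + mu^2) * y 4%nat.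
Proof. unfold laplace1, d0, delta2, Defs.d1, flat. rewrite nab1F, br1F.
unfold br1, nab1, ip, sum5, ebasis; simpl; field. Qed.

Definition br2 (lam mu : R) (x y : vec) : vec := fun k =>
  match k with 3%nat => lam*(x 0%nat * y 1%nat - x 1%nat * y 0%nat) | 4%nat => mu*(x 0%nat * y 2%nat - x 2%nat * y 0%nat) | _ => 0 end.
Lemma br2E lam mu x y : br (case2 lam mu) x y = br2 lam mu x y.
Proof. extensionality k. destruct k as [|[|[|[|[|k]]]]]; unfold br, sum5, case2, br2; simpl; ring. Qed.
Definition nab2 (lam mu : R) (x y : vec) : vec := fun k =>
  match k with
  | 0%nat => / 2 * (lam * (y 1%nat * x 3%nat + x 1%nat * y 3%nat) + mu * (y 2%nat * x 4%nat + x 2%nat * y 4%nat))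
  | 1%nat => - / 2 * lam * (x 0%nat * y 3%nat + y 0%nat * x 3%nat)
  | 2%nat => - / 2 * mu * (x 0%nat * y 4%nat + y 0%nat * x 4%nat)
  | 3%nat => / 2 * lam * (x 0%nat * y 1%nat - x 1%nat * y 0%nat)
  | 4%nat => / 2 * mu * (x 0%nat * y 2%nat - y 0%nat * x 2%nat)
  | _ => 0 end.
Lemma nab2E lam mu x y : nabla (case2 lam mu) x y = nab2 lam mu x y.
Proof. extensionality k. unfold nabla. rewrite !br2E. destruct k as [|[|[|[|[|k]]]]]; unfold br2, nab2, ip, sum5, ebasis; simpl; ring. Qed.
Lemma nab2F lam mu : nabla (case2 lam mu) = nab2 lam mu.
Proof. do 2 (apply functional_extensionality; intro). apply nab2E. Qed.
Lemma br2F lam mu : br (case2 lam mu) = br2 lam mu.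
Proof. do 2 (apply functional_extensionality; intro). apply br2E. Qed.
Lemma lap2 lam mu X y : laplace1 (case2 lam mu) (flat X) y = lam^2 * X 3%nat * y 3%nat + mu^2 * X 4%nat * y 4%nat.
Proof. unfold laplace1, d0, delta2, Defs.d1, flat. rewrite nab2F, br2F.
unfold br2, nab2, ip, sum5, ebasis; simpl; field. Qed.

Definition br3 (lam : R) (x y : vec) : vec := fun k =>
  match k with 2%nat => lam*(x 0%nat * y 1%nat - x 1%nat * y 0%nat) | _ => 0 end.
Lemma br3E lam x y : br (case3 lam) x y = br3 lam x y.
Proof. extensionality k. destruct k as [|[|[|[|[|k]]]]]; unfold br, sum5, case3, br3; simpl; ring. Qed.
Definition nab3 (lam : R) (x y : vec) : vec := fun k =>
  match k with
  | 0%nat => / 2 * lam * (y 1%nat * x 2%nat + x 1%nat * y 2%nat)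
  | 1%nat => - / 2 * lam * (x 0%nat * y 2%nat + y 0%nat * x 2%nat)
  | 2%nat => / 2 * lam * (x 0%nat * y 1%nat - x 1%nat * y 0%nat)
  | _ => 0 end.
Lemma nab3E lam x y : nabla (case3 lam) x y = nab3 lam x y.
Proof. extensionality k. unfold nabla. rewrite !br3E. destruct k as [|[|[|[|[|k]]]]]; unfold br3, nab3, ip, sum5, ebasis; simpl; ring. Qed.
Lemma nab3F lam : nabla (case3 lam) = nab3 lam.
Proof. do 2 (apply functional_extensionality; intro). apply nab3E. Qed.
Lemma br3F lam : br (case3 lam) = br3 lam.
Proof. do 2 (apply functional_extensionality; intro). apply br3E. Qed.
Lemma lap3 lam X y : laplace1 (case3 lam) (flat X) y = lam^2 * X 2%nat * y 2%nat.
Proof. unfold laplace1, d0, delta2, Defs.d1, flat. rewrite nab3F, br3F.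
unfold br3, nab3, ip, sum5, ebasis; simpl; field. Qed.

Lemma ipE x y : ip x y = x 0%nat * y 0%nat + x 1%nat * y 1%nat + x 2%nat * y 2%nat + x 3%nat * y 3%nat + x 4%nat * y 4%nat.
Proof. unfold ip, sum5; simpl; ring. Qed.
Lemma ebE i k : ebasis i k = if Nat.eqb k i then 1 else 0.
Proof. reflexivity. Qed.
Lemma mz a b : a <> 0 -> a * b = 0 -> b = 0.
Proof. intros H1 H2. destruct (Rmult_integral _ _ H2); [contradiction|assumption]. Qed.

Theorem mainTheorem5 (lam mu : R) :
  (lam >= mu -> mu > 0 ->
     forall X : vec, harmonic (case1 lam mu) X <-> perp_center (case1 lam mu) X) /\
  (lam >= mu -> mu > 0 ->
     forall X : vec, harmonic (case2 lam mu) X <-> perp_center (case2 lam mu) X) /\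
  (lam > 0 ->
     forall X : vec, harmonic (case3 lam) X <-> ip X (ebasis 2) = 0).
Proof.
  split; [|split].
  - intros Hl Hm X.
    assert (Hpos : lam^2 + mu^2 > 0) by nra.
    assert (E : harmonic (case1 lam mu) X <-> X 4%nat = 0).
    { unfold harmonic. split.
      - intros H. specialize (H (ebasis 4)). rewrite lap1 in H.
        unfold ebasis in H; simpl in H. nra.
      - intros H y. rewrite lap1, H. ring. }
    rewrite E. unfold perp_center, in_center. split.
    + intros H z Hz. rewrite ipE, H.
      assert (Hl0 : lam <> 0) by lra. assert (Hm0 : mu <> 0) by lra.
      pose proof (Hz (ebasis 1) 4%nat ltac:(lia)) as H1.
      pose proof (Hz (ebasis 0) 4%nat ltac:(lia)) as H2.
      pose proof (Hz (ebasis 3) 4%nat ltac:(lia)) as H3.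
      pose proof (Hz (ebasis 2) 4%nat ltac:(lia)) as H4.
      rewrite br1E in H1, H2, H3, H4. unfold br1, ebasis in H1, H2, H3, H4; simpl in H1, H2, H3, H4.
      assert (z 0%nat = 0) by (apply (mz lam); lra).
      assert (z 1%nat = 0) by (apply (mz lam); lra).
      assert (z 2%nat = 0) by (apply (mz mu); lra).
      assert (z 3%nat = 0) by (apply (mz mu); lra).
      nra.
    + intros H. specialize (H (ebasis 4)). rewrite ipE in H. unfold ebasis in H; simpl in H.
      rewrite <- H; [ring|].
      intros y k Hk. rewrite br1E. unfold br1, ebasis.
      destruct k as [|[|[|[|[|k]]]]]; simpl; ring.
  - intros Hl Hm X.
    assert (E : harmonic (case2 lam mu) X <-> X 3%nat = 0 /\ X 4%nat = 0).
    { unfold harmonic. split.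
      - intros H. pose proof (H (ebasis 3)) as H3. pose proof (H (ebasis 4)) as H4.
        rewrite lap2 in H3, H4. unfold ebasis in H3, H4; simpl in H3, H4.
        assert (lam^2 > 0) by nra. assert (mu^2 > 0) by nra. split; nra.
      - intros [H3 H4] y. rewrite lap2, H3, H4. ring. }
    rewrite E. unfold perp_center, in_center. split.
    + intros [H3' H4'] z Hz. rewrite ipE, H3', H4'.
      assert (Hl0 : lam <> 0) by lra. assert (Hm0 : mu <> 0) by lra.
      pose proof (Hz (ebasis 1) 3%nat ltac:(lia)) as H1.
      pose proof (Hz (ebasis 0) 3%nat ltac:(lia)) as H2.
      pose proof (Hz (ebasis 0) 4%nat ltac:(lia)) as H3.
      rewrite br2E in H1, H2, H3. unfold br2, ebasis in H1, H2, H3; simpl in H1, H2, H3.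
      assert (z 0%nat = 0) by (apply (mz lam); lra).
      assert (z 1%nat = 0) by (apply (mz lam); lra).
      assert (z 2%nat = 0) by (apply (mz mu); lra).
      nra.
    + intros H. pose proof (H (ebasis 3)) as H3. pose proof (H (ebasis 4)) as H4.
      rewrite ipE in H3, H4. unfold ebasis in H3, H4; simpl in H3, H4.
      split; [rewrite <- H3|rewrite <- H4]; try ring;
      intros y k Hk; rewrite br2E; unfold br2, ebasis;
      destruct k as [|[|[|[|[|k]]]]]; simpl; ring.
  - intros Hl X. unfold harmonic. rewrite ipE. unfold ebasis; simpl.
    split.
    + intros H. specialize (H (ebasis 2)). rewrite lap3 in H. unfold ebasis in H; simpl in H.
      assert (lam^2 > 0) by nra. nra.
    + intros H y. rewrite lap3. assert (X 2%nat = 0) by lra. rewrite H0. ring.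
Qed.
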